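(* Let $\mathcal G$ be a Hilbert space of arbitrary (finite or infinite) dimension, let $A,B$ be bounded everywhere defined linear operators in $\mathcal G$ such that the linear relation $\Lambda=\{(f,f')\in\mathcal G\oplus\mathcal G:\ Af=Bf'\}$ is closed, and let $R$ be a bounded operator in $\mathcal G$. Then $(\Lambda-R)^{-1}$ is (the graph of) a bounded everywhere defined operator in $\mathcal G$ if and only if $\ker(A-BR)=\{0\}$ and $\operatorname{Ran}B\subset\operatorname{Ran}(A-BR)$.
   Context: A linear relation in $\mathcal G$ is a linear subspace of $\mathcal G\oplus\mathcal G$. For a relation $\Lambda$ and an operator $R$, $\Lambda-R=\{(f,f'-Rf):\ (f,f')\in\Lambda\}$, and the inverse relation of a relation $\Theta$ is $\Theta^{-1}=\{(g,f):(f,g)\in\Theta\}$. *)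

(* Defs.v *)
From HB Require Import structures.
From mathcomp Require Import all_boot all_order all_algebra.
From mathcomp Require Import complex.
From mathcomp Require Import all_classical all_reals all_analysis.
Set Implicit Arguments. Unset Strict Implicit. Unset Printing Implicit Defensive.
Import Order.TTheory GRing.Theory Num.Theory.
Import numFieldNormedType.Exports.
Local Open Scope ring_scope.
Local Open Scope classical_set_scope.
Local Open Scope complex_scope.

Section Defs.
Context {R : realType} {V : normedModType R[i]}.

(* ip is an inner product on V (linear in the first argument, conjugate
   symmetric) inducing the norm of V: <x,x> = |x|^2. Together with
   completeness of V this makes V a (complex) Hilbert space. *)
Definition is_inner_product (ip : V -> V -> R[i]) : Prop :=
  [/\ forall (a : R[i]) (x y z : V), ip (a *: x + y) z = a * ip x z + ip y z,
      forall x y : V, ip y x = (ip x y)^* &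
      forall x : V, ip x x = `|x| ^+ 2].

Definition bounded_op (T : V -> V) : Prop :=
  exists M : R[i], forall x : V, `|T x| <= M * `|x|.

Definition linrel_kernel_rel (A B : V -> V) : set (V * V) :=
  [set p | A p.1 = B p.2].

Definition rel_sub_op (L : set (V * V)) (Rop : V -> V) : set (V * V) :=
  [set p | exists f f', L (f, f') /\ p = (f, f' - Rop f)].

Definition rel_inv (L : set (V * V)) : set (V * V) :=
  [set p | L (p.2, p.1)].

Definition op_graph (T : V -> V) : set (V * V) :=
  [set p | p.2 = T p.1].

End Defs.

(* Main.v *)
Require Import Defs.
From HB Require Import structures.
From mathcomp Require Import all_boot all_order all_algebra.
From mathcomp Require Import complex.
From mathcomp Require Import all_classical all_reals all_analysis.
From mathcomp Require Import ring lra.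
Import Order.TTheory GRing.Theory Num.Theory.
Import numFieldNormedType.Exports.
Local Open Scope ring_scope.
Local Open Scope classical_set_scope.
Local Open Scope complex_scope.

Section S.
Set Implicit Arguments.
Variables (R : realType) (G : completeNormedModType R[i]).

Definition N (x : G) : R := complex.Re `|x|.

Lemma normE (x : G) : `|x| = (N x)%:C.
Proof.
have := normr_ge0 x; rewrite lecE => /andP[/eqP him _].
by rewrite /N; case: (`|x|) him => a b /= ->.
Qed.

Lemma N_ge0 x : 0 <= N x.
Proof. by rewrite -ler0c -normE. Qed.

Lemma N0 : N 0 = 0.
Proof. by rewrite /N normr0. Qed.

Lemma N_eq0 x : N x = 0 -> x = 0.
Proof. by move=> h; apply/normr0_eq0; rewrite normE h. Qed.

Lemma ND x y : N (x + y) <= N x + N y.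
Proof. by rewrite -lecR -[(_ + _)%:C]/((real_complex R) (N x + N y)) rmorphD /= -!normE ler_normD. Qed.

Lemma NN x : N (- x) = N x.
Proof. by rewrite /N normrN. Qed.

Lemma NC x y : N (x - y) = N (y - x).
Proof. by rewrite /N distrC. Qed.

Lemma NZ (c : R) x : N (c%:C *: x) = `|c| * N x.
Proof.
rewrite /N normrZ normE normc_def /= expr0n /= addr0 sqrtr_sqr /=.
by rewrite mulr0 subr0.
Qed.

Lemma arch (e : R) : 0 < e -> exists n : nat, (2^-1) ^+ n < e.
Proof.
move=> e0; exists (Num.truncn (e^-1)).
rewrite exprVn -[ltRHS]invrK ltf_pV2 ?posrE ?invr_gt0 ?exprn_gt0 //.
apply: (lt_le_trans (truncnS_gt _)).
rewrite -natrX ler_nat; exact: ltn_expl.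
Qed.


Definition w (n : nat) : R := (2^-1) ^+ n.

Lemma w_ge0 n : 0 <= w n.
Proof. by rewrite /w exprn_ge0 // invr_ge0. Qed.

Lemma wS n : w n.+1 = 2^-1 * w n.
Proof. by rewrite /w exprS. Qed.

Lemma w0 : w 0 = 1.
Proof. by rewrite /w expr0. Qed.

Lemma geom_bound (u : nat -> G) (c : R) :
  (forall n, N (u n.+1 - u n) <= c * w n) ->
  forall n m, (n <= m)%N -> N (u m - u n) <= 2 * c * (w n - w m).
Proof.
move=> H n m /subnK <-; elim: (m - n)%N => [|k IH].
  by rewrite add0n subrr N0 subrr mulr0.
rewrite addSn wS.
have e : u (k + n)%N.+1 - u n = (u (k + n)%N.+1 - u (k + n)%N) + (u (k + n)%N - u n).
  by rewrite addrA subrK.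
rewrite e; apply: (le_trans (ND _ _)).
have := H (k + n)%N; move: IH.
set a := N _; set b := N _; set x := w _; set y := w _ => h1 h2.
lra.
Qed.

Lemma c_ge0 (u : nat -> G) (c : R) :
  (forall n, N (u n.+1 - u n) <= c * w n) -> 0 <= c.
Proof. by move=> /(_ 0%N); rewrite w0 mulr1; apply: le_trans; apply: N_ge0. Qed.

Lemma Re_pos (e : R[i]) : 0 < e -> e = (complex.Re e)%:C /\ 0 < complex.Re e.
Proof.
case: e => a b; rewrite ltcE /= => /andP[/eqP -> hre]; split => //.
Qed.

Lemma geom_cvg (u : nat -> G) (c : R) :
  (forall n, N (u n.+1 - u n) <= c * w n) -> cvgn u.
Proof.
move=> H; have c0 := @c_ge0 u c H.
apply/cauchy_cvgP; apply: cauchy_exP => e /Re_pos [ee e0].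
set r := complex.Re e in ee e0; rewrite ee.
have q0 : 0 < r / (1 + 2 * c) by apply: divr_gt0 => //; lra.
have [k hk] := @arch _ q0.
exists (u k); exists k => // m /= km.
rewrite -ball_normE /ball_ /= normE ltcR NC.
apply: (le_lt_trans (@geom_bound u c H k m km)).
  move: hk; rewrite -/(w k) ltr_pdivlMr; last lra.
  have := w_ge0 k; have := w_ge0 m.
  set x := w k; set y := w m => h1 h2 h3.
  nra.
Qed.

Lemma lim_bound (u : nat -> G) l a b k : u @ \oo --> l ->
  (forall m, (k <= m)%N -> N (u m - a) <= b) -> N (l - a) <= b.
Proof.
move=> hu hb; rewrite leNgt; apply/negP => hlt.
have d0 : 0 < N (l - a) - b by rewrite subr_gt0.
have d0' : 0 < (N (l - a) - b)%:C by rewrite ltcR.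
move/cvgr_dist_lt: hu => /(_ _ d0') [M _ HM].
have := HM (maxn M k) (leq_maxl _ _); rewrite normE ltcR => h1.
have h2 := hb _ (leq_maxr M k).
have := ND (l - u (maxn M k)) (u (maxn M k) - a).
rewrite addrA subrK; lra.
Qed.


Lemma bounded_cont (L : {linear G -> G}) : bounded_op L -> continuous L.
Proof.
move=> [M HM].
have HM' z : `|L z| <= (`|M| + 1) * `|z|.
  have h := HM z.
  have h0 : 0 <= M * `|z| := le_trans (normr_ge0 _) h.
  apply: (le_trans h); rewrite -(ger0_norm h0) normrM normr_id.
  by rewrite ler_wpM2r // lerDl.
have M0 : 0 < `|M| + 1 by rewrite ltr_wpDl.
move=> x; apply/(@cvgrPdist_lt _ _ _ (nbhs x)) => e e0; near=> z.
rewrite -linearB; apply: (le_lt_trans (HM' _)).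
rewrite mulrC -ltr_pdivlMr //.
near: z; apply: cvgr_dist_lt => //; exact: divr_gt0.
Unshelve. all: by end_near. Qed.


Lemma w_gt0 n : 0 < w n.
Proof. by rewrite /w exprn_gt0 // invr_gt0. Qed.

Lemma w_le k m : (k <= m)%N -> w m <= w k.
Proof.
move=> /subnK <-; elim: (m - k)%N => [|j IH] //.
rewrite addSn wS; have := w_gt0 (j + k)%N; lra.
Qed.

Lemma step1 (T : {linear G -> G}) :
  (forall (u : nat -> G) y h, u @ \oo --> y -> (T \o u) @ \oo --> h -> h = T y) ->
  exists (n : nat) (x0 : G) (r : R), 0 < r /\ forall y, N (y - x0) < r ->
    forall eps, 0 < eps -> exists g, N (T g) <= n%:R /\ N (y - g) < eps.
Proof.
move=> Tcl; apply: contrapT => Hn.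
have H : forall p : nat * G * R, exists q : G * R, 0 < p.2 ->
    [/\ N (q.1 - p.1.2) < p.2, 0 < q.2 &
         forall g, N (T g) <= p.1.1%:R -> q.2 <= N (q.1 - g)].
  move=> [[n x0] r] /=; case: (boolP (0 < r)) => r0; last first.
    by exists (0, 0).
  apply: contrapT => hq; apply: Hn; exists n, x0, r; split => // y hy eps eps0.
  apply: contrapT => hg; apply: hq; exists (y, eps) => _ /=; split => // g hg'.
  rewrite leNgt; apply/negP => hlt; apply: hg; exists g; split => //.
have [F HF] := choice H.
pose fix st (k : nat) : G * R := if k is k'.+1 then
    let q := F (k', (st k').1, (st k').2) in
    (q.1, Num.min q.2 ((st k').2 - N (q.1 - (st k').1)) / 2)
  else (0, 1).
pose x k := (st k).1; pose r k := (st k).2.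
pose ep k := (F (k, x k, r k)).2.
have stS k : x k.+1 = (F (k, x k, r k)).1 /\
    r k.+1 = Num.min (ep k) (r k - N ((F (k, x k, r k)).1 - x k)) / 2 by [].
have rpos : forall k, 0 < r k.
  elim => [|k IH]; first by rewrite /r /= ltr01.
  have [hx hr] := stS k; have [h1 h2 _] := HF (k, x k, r k) IH.
  rewrite hr divr_gt0 // lt_min h2 subr_gt0 h1 //.
have facts k : [/\ N (x k.+1 - x k) + 2 * r k.+1 <= r k,
    2 * r k.+1 <= ep k &
    forall g, N (T g) <= k%:R -> ep k <= N (x k.+1 - g)].
  have [hx hr] := stS k; have [h1 h2 h3] := HF (k, x k, r k) (rpos k).
  have m1 : Num.min (ep k) (r k - N ((F (k, x k, r k)).1 - x k)) <= ep k.
    by rewrite ge_min lexx.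
  have m2 : Num.min (ep k) (r k - N ((F (k, x k, r k)).1 - x k))
      <= r k - N ((F (k, x k, r k)).1 - x k).
    by rewrite ge_min lexx orbT.
  rewrite hx hr; split.
  - move: m2; set mm := Num.min _ _; set nn := N _; lra.
  - move: m1; set mm := Num.min _ _; lra.
  - by move=> g /h3.
have rw k : r k <= w k.
  elim: k => [|k IH]; first by rewrite w0 /r /=.
  have [f1 _ _] := facts k; have := N_ge0 (x k.+1 - x k); rewrite wS.
  move: f1 IH; set a := N _; lra.
have cx : cvgn x.
  apply: (@geom_cvg x 1) => n; rewrite mul1r.
  have [f1 _ _] := facts n; have := rw n; have := rpos n.+1; lra.
set l := limn x.
have xl : x @ \oo --> l by exact: cx.
have nest n m : (n <= m)%N -> N (x m - x n) + r m <= r n.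
  move=> /subnK <-; elim: (m - n)%N => [|j IH].
    by rewrite add0n subrr N0 add0r.
  rewrite addSn; have [f1 _ _] := facts (j + n)%N.
  have e : x (j + n)%N.+1 - x n = (x (j + n)%N.+1 - x (j + n)%N) + (x (j + n)%N - x n).
    by rewrite addrA subrK.
  have := ND (x (j + n)%N.+1 - x (j + n)%N) (x (j + n)%N - x n); rewrite -e.
  have := rpos (j + n)%N.+1; move: f1 IH.
  set a := N (x _ - x _); set b := N (x _ - x _); set c := N (x _ - x _); lra.
pose k := (Num.truncn (N (T l))).+1.
have kb : N (T l) <= k%:R by apply/ltW/truncnS_gt.
have lb : N (l - x k.+1) <= r k.+1.
  apply: (@lim_bound x l (x k.+1) (r k.+1) k.+1 xl) => m hm.
  have := nest _ _ hm; have := rpos m; set a := N _; lra.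
have [_ f2 f3] := facts k.
have := f3 l kb; rewrite NC; have := rpos k.+1; move: lb f2; set a := N _; lra.
Qed.


Lemma step2 (T : {linear G -> G}) (n : nat) (x0 : G) (r : R) : 0 < r ->
  (forall y, N (y - x0) < r ->
    forall eps, 0 < eps -> exists g, N (T g) <= n%:R /\ N (y - g) < eps) ->
  exists K, 0 <= K /\ forall y eps, 0 < eps ->
    exists g, N (T g) <= K * N y /\ N (y - g) < eps.
Proof.
move=> r0 Hb; exists (4 * n%:R / r); split.
  by apply: divr_ge0; [apply: mulr_ge0 | apply: ltW].
move=> y eps eps0.
have [->|y0] := eqVneq y 0.
  by exists 0; rewrite linear0 N0 subrr N0 mulr0.
have a0 : 0 < N y.
  rewrite lt_neqAle N_ge0 andbT; apply/eqP => h; apply: (negP y0); apply/eqP.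
  exact: N_eq0 (esym h).
set a := N y in a0 *.
pose s := r / (2 * a).
have s0 : 0 < s by rewrite divr_gt0 // mulr_gt0.
pose z := s%:C *: y.
have Nz : N z = r / 2.
  rewrite /z NZ (ger0_norm (ltW s0)) /s -/a; field; rewrite ?gt_eqF //.
have e1 : 0 < eps * s / 2 by rewrite divr_gt0 // mulr_gt0.
have [g1 [hg1 ng1]] : exists g, N (T g) <= n%:R /\ N (x0 + z - g) < eps * s / 2.
  by apply: Hb => //; rewrite addrAC subrr add0r Nz; lra.
have [g2 [hg2 ng2]] : exists g, N (T g) <= n%:R /\ N (x0 - g) < eps * s / 2.
  by apply: Hb => //; rewrite subrr N0.
have si : 0 <= s^-1 by rewrite invr_ge0 ltW.
exists ((s^-1)%:C *: (g1 - g2)); split.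
  rewrite linearZ /= NZ (ger0_norm si) linearB /=.
  have := ND (T g1) (- T g2); rewrite NN => h.
  have h2 : N (T g1 - T g2) <= 2 * n%:R by lra.
  apply: (le_trans (ler_wpM2l si h2)).
  rewrite /s invf_div -/a le_eqVlt; apply/orP; left; apply/eqP; field.
  by rewrite gt_eqF.
have ey : y = (s^-1)%:C *: z.
  by rewrite /z scalerA -rmorphM mulVf ?gt_eqF // scale1r.
have ed : z - (g1 - g2) = (x0 + z - g1) - (x0 - g2).
  rewrite [in RHS]opprB -(addrA x0 z) -(addrA x0) (addrC x0) -(addrA (z - g1)).
  by rewrite subrK opprB (addrC g2) addrA.
rewrite {1}ey -scalerBr NZ (ger0_norm si) ed.
have := ND (x0 + z - g1) (- (x0 - g2)); rewrite NN => h.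
rewrite -ltr_pdivlMl ?invr_gt0 // invrK.
lra.
Qed.


Lemma cgt (T : {linear G -> G}) :
  (forall (u : nat -> G) y h, u @ \oo --> y -> (T \o u) @ \oo --> h -> h = T y) ->
  exists K : R, forall x, N (T x) <= K * N x.
Proof.
move=> Tcl; have [n [x0 [r [r0 Hb]]]] := @step1 T Tcl.
have [K [K0 HK]] := @step2 T n x0 r r0 Hb.
exists (2 * K) => y.
have [->|y0] := eqVneq y 0.
  by rewrite linear0 N0 mulr0.
have a0 : 0 < N y.
  rewrite lt_neqAle N_ge0 andbT; apply/eqP => h; apply: (negP y0); apply/eqP.
  exact: N_eq0 (esym h).
set a := N y in a0 *.
have H : forall p : G * R, exists g, 0 < p.2 ->
    N (T g) <= K * N p.1 /\ N (p.1 - g) < p.2.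
  move=> [z e] /=; case: (boolP (0 < e)) => e0; last by exists 0.
  by have [g hg] := HK z e e0; exists g.
have [Phi HPhi] := choice H.
pose fix ys k := if k is k'.+1 then ys k' - Phi (ys k', a * w k'.+1) else y.
pose gs k := Phi (ys k, a * w k.+1).
have ysS k : ys k.+1 = ys k - gs k by [].
have hgs k : N (T (gs k)) <= K * N (ys k) /\ N (ys k - gs k) < a * w k.+1.
  exact: (HPhi (ys k, a * w k.+1) (mulr_gt0 a0 (w_gt0 _))).
have Nys k : N (ys k) <= a * w k.
  case: k => [|k]; first by rewrite w0 mulr1.
  by rewrite ysS; apply/ltW; have [_ h] := hgs k.
pose Sq m := y - ys m.
pose U m := T (Sq m).
have SS m : Sq m.+1 - Sq m = gs m.
  by rewrite /Sq ysS [y - (ys m - gs m)]addrC addrKA opprK opprB subrK.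
have cS : cvgn Sq.
  apply: (@geom_cvg Sq (2 * a)) => m; rewrite SS.
  have e : gs m = ys m - ys m.+1 by rewrite ysS opprB addrC subrK.
  rewrite e; have := ND (ys m) (- ys m.+1); rewrite NN.
  have := Nys m; have := Nys m.+1; rewrite wS.
  have := w_gt0 m; set b := w m; set c := N _; set d := N _; set f := N _.
  nra.
have UU m : N (U m.+1 - U m) <= (K * a) * w m.
  rewrite /U -linearB SS; have [h _] := hgs m.
  rewrite -mulrA; apply: (le_trans h); apply: ler_wpM2l => //.
have cU : cvgn U := @geom_cvg U (K * a) UU.
set l1 := limn Sq; set h := limn U.
have Sl : Sq @ \oo --> l1 by exact: cS.
have Uh : U @ \oo --> h by exact: cU.
have l1y : l1 = y.
  have hb k : N (l1 - y) <= a * w k.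
    apply: (@lim_bound Sq l1 y _ k Sl) => m hm.
    rewrite /Sq addrC addKr NN; apply: (le_trans (Nys m)).
    by apply: ler_wpM2l; [exact: ltW | exact: w_le].
  have : N (l1 - y) = 0.
    apply/eqP; rewrite eq_le N_ge0 andbT leNgt; apply/negP => hlt.
    have [k hk] := @arch _ (divr_gt0 hlt a0).
    have := hb k; move: hk; rewrite -/(w k) ltr_pdivlMr // => h1 h2.
    move: h1 h2; set b := w k; set c := N _; nra.
  by move/N_eq0/eqP; rewrite subr_eq0 => /eqP.
have hT : h = T y.
  rewrite -l1y; apply: Tcl Sl _; exact: Uh.
have hb : N (h - U 0%N) <= 2 * (K * a).
  apply: (@lim_bound U h (U 0%N) _ 0 Uh) => m _.
  apply: (le_trans (@geom_bound U (K * a) UU 0 m (leq0n m))).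
  have := w_gt0 m; rewrite w0; have := mulr_ge0 K0 (ltW a0).
  set b := w m; set c := K * a; nra.
move: hb; rewrite /U /Sq subrr linear0 subr0 hT -mulrA //.
Qed.


Definition mklin (f : G -> G) (lf : linear f) : {linear G -> G} :=
  HB.pack f (GRing.isLinear.Build _ _ _ _ f lf).

End S.

Theorem lemmaA1 (R : realType) (G : completeNormedModType R[i])
    (ip : G -> G -> R[i]) (Hip : is_inner_product ip)
    (A B Rop : {linear G -> G})
    (hA : bounded_op A) (hB : bounded_op B) (hR : bounded_op Rop)
    (hclosed : closed (linrel_kernel_rel A B)) :
  (exists T : {linear G -> G},
      bounded_op T /\
      rel_inv (rel_sub_op (linrel_kernel_rel A B) Rop) = op_graph T)
  <->
  ([set x | A x - B (Rop x) = 0] = [set 0] /\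
   range B `<=` range (fun x => A x - B (Rop x))).
Proof.
pose C x := A x - B (Rop x).
have Clin : linear C.
  by move=> a u v; rewrite /C !linearD !linearZ /= addrACA.
pose Cl := mklin Clin.
have ClE x : Cl x = C x by [].
have mem g f : rel_inv (rel_sub_op (linrel_kernel_rel A B) Rop) (g, f) <-> C f = B g.
  rewrite /rel_inv /rel_sub_op /linrel_kernel_rel /=; split.
    move=> [f0 [f' [hL [-> ->]]]]; rewrite /C /= in hL *.
    by rewrite hL linearB.
  move=> hC; exists f, (g + Rop f); split; last by rewrite addrK.
  rewrite /= linearD /=; move: hC; rewrite /C => <-; by rewrite subrK.
split.
  move=> [T [_ heq]].
  have memT g f : C f = B g <-> f = T g.
    by rewrite -mem heq.
  split.
    apply/seteqP; split => x /=.
      move=> hx; have h1 : C x = B 0 by rewrite linear0; exact: hx.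
      by rewrite ((memT 0 x).1 h1) linear0.
    by move=> ->; rewrite !linear0 addr0.
  move=> _ [g _ <-]; exists (T g) => //; exact: ((memT g (T g)).2 erefl).
move=> [hker hran].
have Cinj u v : C u = C v -> u = v.
  move=> h; apply/eqP; rewrite -subr_eq0; apply/eqP.
  have : [set x | A x - B (Rop x) = 0] (u - v).
    by rewrite /= (_ : A (u - v) - B (Rop (u - v)) = Cl (u - v)) // linearB !ClE h subrr.
  by rewrite hker.
have ex g : exists f, C f = B g.
  have [f _ hf] : range (fun x => A x - B (Rop x)) (B g) by apply: hran; exists g.
  by exists f.
have [T0 hT0] := choice ex.
have T0lin : linear T0.
  move=> a u v; apply: Cinj; by rewrite hT0 -ClE !linearD !linearZ !ClE !hT0.
pose T := mklin T0lin.
have TE g : T g = T0 g by [].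
have contA := @bounded_cont _ _ _ hA; have contB := @bounded_cont _ _ _ hB.
have contR := @bounded_cont _ _ _ hR.
have Tcl : forall (u : nat -> G) y h, u @ \oo --> y -> (T \o u) @ \oo --> h -> h = T y.
  move=> u y h uy Tuh; apply: Cinj; rewrite TE hT0.
  have L1 : (C \o (T \o u)) @ \oo --> C h.
    apply: (@cvgB _ _ _ _ _ (A \o (T \o u)) (B \o (Rop \o (T \o u)))).
      exact: (continuous_cvg _ (contA h) Tuh).
    exact: (continuous_cvg _ (contB _) (continuous_cvg _ (contR h) Tuh)).
  have L2 : (C \o (T \o u)) @ \oo --> B y.
    have -> : C \o (T \o u) = B \o u.
      by apply: funext => n /=; exact: hT0.
    exact: (continuous_cvg _ (contB y) uy).
  exact: (cvg_unique _ L1 L2).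
have [K HK] := @cgt _ _ T Tcl.
exists T; split.
  exists K%:C => x; rewrite !normE -rmorphM lecR; exact: HK.
apply: funext => -[g f]; apply: propext; rewrite mem /op_graph /=.
split; first by move=> h; apply: Cinj; rewrite hT0.
by move=> ->; rewrite hT0.
Qed.
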